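(* Let $f=h+\overline{g}$ be a sense-preserving locally univalent harmonic mapping in $\mathbb{D}$ with $f\in\mathcal{BT}$ and dilatation $w$ satisfying $\|w\|<1$. Then for all $z_1,z_2\in\mathbb{D}$, $$|f(z_1)-f(z_2)|\le\left(\frac{1+\|w\|}{1-\|w\|}\right)^{1/2}\beta_2(f)\,d_h(z_1,z_2).$$
   Context: $\mathbb{D}$ is the unit disk. A sense-preserving locally univalent harmonic mapping $f:\mathbb{D}\to\mathbb{C}$ is written $f=h+\overline{g}$ with $h,g$ analytic in $\mathbb{D}$, $h'\neq 0$ in $\mathbb{D}$; its dilatation is $w=g'/h'$, analytic with $|w|<1$ in $\mathbb{D}$, and $\|w\|=\sup_{z\in\mathbb{D}}|w(z)|$. For a smooth $F:\mathbb{D}\to\mathbb{C}$, $J_F=|F_z|^2-|F_{\bar z}|^2$ with $\partial_z=\frac12(\partial_x-i\partial_y)$, $\partial_{\bar z}=\frac12(\partial_x+i\partial_y)$ (so $J_f=|h'|^2-|g'|^2$). The Bloch-type class $\mathcal{BT}$ consists of smooth $F:\mathbb{D}\to\mathbb{C}$ with $\beta_2(F):=\sup_{z\in\mathbb{D}}(1-|z|^2)\sqrt{|J_F(z)|}<\infty$. The hyperbolic distance is $d_h(z,\xi)=\frac12\log\frac{1+p(z,\xi)}{1-p(z,\xi)}$ with $p(z,\xi)=\left|\frac{z-\xi}{1-\overline{\xi}z}\right|$. *)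

(* Defs.v *)
From Stdlib Require Import Reals.
From Coquelicot Require Import Coquelicot.
Open Scope R_scope.

Definition inD (z : C) : Prop := Cmod z < 1.

(* Complex differentiability of h : C -> C at every point of D
   (ex_derive over the absolute ring C, i.e. holomorphy in D). *)
Definition analytic_on_D (h : C -> C) : Prop :=
  forall z : C, inD z -> @ex_derive C_AbsRing C_NormedModule h z.

Definition cderiv (h : C -> C) (z : C) : C := C_derive h z.

Definition dilatation (h g : C -> C) (z : C) : C := Cdiv (cderiv g z) (cderiv h z).

Definition supD (phi : C -> R) : Rbar :=
  Lub_Rbar (fun r => exists z : C, inD z /\ r = phi z).

Definition dil_norm (h g : C -> C) : Rbar := supD (fun z => Cmod (dilatation h g z)).

Definition pdx (F : C -> C) (z : C) : C :=
  (Derive (fun t => fst (F (Cplus z (t, 0)))) 0,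
   Derive (fun t => snd (F (Cplus z (t, 0)))) 0).
Definition pdy (F : C -> C) (z : C) : C :=
  (Derive (fun t => fst (F (Cplus z (0, t)))) 0,
   Derive (fun t => snd (F (Cplus z (0, t)))) 0).

Definition dz (F : C -> C) (z : C) : C :=
  Cmult (RtoC (/2)) (Cminus (pdx F z) (Cmult Ci (pdy F z))).
Definition dzbar (F : C -> C) (z : C) : C :=
  Cmult (RtoC (/2)) (Cplus (pdx F z) (Cmult Ci (pdy F z))).

Definition jacobian (F : C -> C) (z : C) : R :=
  (Cmod (dz F z)) ^ 2 - (Cmod (dzbar F z)) ^ 2.

Definition beta2 (F : C -> C) : Rbar :=
  supD (fun z => (1 - (Cmod z) ^ 2) * sqrt (Rabs (jacobian F z))).

Definition in_BT (F : C -> C) : Prop := Rbar_lt (beta2 F) p_infty.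

Definition pseudo_hyp (z xi : C) : R :=
  Cmod (Cdiv (Cminus z xi) (Cminus (RtoC 1) (Cmult (Cconj xi) z))).
Definition hyp_dist (z xi : C) : R :=
  / 2 * ln ((1 + pseudo_hyp z xi) / (1 - pseudo_hyp z xi)).

(* Main.v *)
Require Import Defs.
From Stdlib Require Import Reals Lra Psatz.
From Coquelicot Require Import Coquelicot.
Open Scope R_scope.

Lemma is_derive_C_eps (F : C -> C) (z d : C) :
  (forall eps : R, 0 < eps -> exists del : R, 0 < del /\ forall w : C,
     Cmod (Cminus w z) < del -> Cmod (Cminus (Cminus (F w) (F z)) (Cmult (Cminus w z) d)) <= eps * Cmod (Cminus w z)) ->
  @is_derive C_AbsRing C_NormedModule F z d.
Proof.
  intros H. split.
  - apply is_linear_scal_l.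
  - intros x Hx. apply (@is_filter_lim_locally_unique C_AbsRing (AbsRing_NormedModule C_AbsRing)) in Hx. subst x.
    intros eps.
    destruct (H eps (cond_pos eps)) as [del [Hd Hw]].
    exists (mkposreal del Hd). intros y Hy. apply Hw. exact Hy.
Qed.

Lemma eps_of_is_derive_C (F : C -> C) (z d : C) :
  @is_derive C_AbsRing C_NormedModule F z d ->
  (forall eps : R, 0 < eps -> exists del : R, 0 < del /\ forall w : C,
     Cmod (Cminus w z) < del -> Cmod (Cminus (Cminus (F w) (F z)) (Cmult (Cminus w z) d)) <= eps * Cmod (Cminus w z)).
Proof.
  intros [_ H] eps Heps.
  specialize (H z (fun P HP => HP) (mkposreal eps Heps)).
  destruct H as [del Hd]. exists del. split. apply cond_pos.
  intros w Hw. apply (Hd w Hw).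
Qed.

Lemma Cmod_1plus_lb (x : C) : 1 - Cmod x <= Cmod (Cplus (RtoC 1) x).
Proof.
  pose proof (Cmod_triangle (Cplus (RtoC 1) x) (Copp x)).
  replace (Cplus (Cplus (RtoC 1) x) (Copp x)) with (RtoC 1) in H by ring.
  rewrite Cmod_1, Cmod_opp in H. lra.
Qed.

Lemma Cmod_conj_mult_lt1 (z w : C) : Cmod z < 1 -> Cmod w <= 1 -> Cmod (Cmult (Cconj z) w) <= Cmod w.
Proof.
  intros. rewrite Cmod_mult, Cmod_conj. pose proof (Cmod_ge_0 w). pose proof (Cmod_ge_0 z). nra.
Qed.

Definition mob (z : C) (w : C) : C := Cdiv (Cplus w z) (Cplus (RtoC 1) (Cmult (Cconj z) w)).
Definition dmob (z : C) (w : C) : C :=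
  Cdiv (Cminus (RtoC 1) (Cmult (Cconj z) z))
    (Cmult (Cplus (RtoC 1) (Cmult (Cconj z) w)) (Cplus (RtoC 1) (Cmult (Cconj z) w))).

Lemma mob_den_lb (z w : C) : Cmod z < 1 -> Cmod w < 1 ->
  1 - Cmod w <= Cmod (Cplus (RtoC 1) (Cmult (Cconj z) w)).
Proof.
  intros. pose proof (Cmod_1plus_lb (Cmult (Cconj z) w)).
  pose proof (Cmod_conj_mult_lt1 z w H (Rlt_le _ _ H0)). lra.
Qed.

Lemma mob_den_nz (z w : C) : Cmod z < 1 -> Cmod w < 1 ->
  Cplus (RtoC 1) (Cmult (Cconj z) w) <> RtoC 0.
Proof.
  intros H H0 E. pose proof (mob_den_lb z w H H0). rewrite E, Cmod_0 in H1. lra.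
Qed.

Lemma mob_derive (z zeta : C) : Cmod z < 1 -> Cmod zeta < 1 ->
  @is_derive C_AbsRing C_NormedModule (mob z) zeta (dmob z zeta).
Proof.
  intros Hz Hzeta. apply is_derive_C_eps. intros eps Heps.
  set (m := (1 - Cmod zeta) / 2).
  assert (Hm : 0 < m) by (unfold m; lra).
  exists (Rmin m (eps * (m * m * m) / 2)). split.
  { apply Rmin_pos. lra. apply Rdiv_lt_0_compat. apply Rmult_lt_0_compat. lra. 
    apply Rmult_lt_0_compat. nra. lra. lra. }
  intros w Hw.
  assert (Hw1 : Cmod (Cminus w zeta) < m) by (eapply Rlt_le_trans; [exact Hw| apply Rmin_l]).
  assert (Hw2 : Cmod (Cminus w zeta) < eps * (m * m * m) / 2) by (eapply Rlt_le_trans; [exact Hw| apply Rmin_r]).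
  assert (Hwm : Cmod w <= Cmod zeta + Cmod (Cminus w zeta)).
  { pose proof (Cmod_triangle zeta (Cminus w zeta)). replace (Cplus zeta (Cminus w zeta)) with w in H by ring. lra. }
  assert (Hw' : Cmod w < 1) by (unfold m in *; lra).
  set (c := Cconj z).
  set (A := Cplus (RtoC 1) (Cmult c zeta)).
  set (Bw := Cplus (RtoC 1) (Cmult c w)).
  assert (HA : A <> RtoC 0) by apply (mob_den_nz z zeta Hz Hzeta).
  assert (HB : Bw <> RtoC 0) by apply (mob_den_nz z w Hz Hw').
  assert (HAl : m <= Cmod A) by (pose proof (mob_den_lb z zeta Hz Hzeta); fold c A in H; unfold m; lra).
  assert (HBl : m <= Cmod Bw) by (pose proof (mob_den_lb z w Hz Hw'); fold c Bw in H; unfold m in *; lra).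
  assert (E : Cminus (Cminus (mob z w) (mob z zeta)) (Cmult (Cminus w zeta) (dmob z zeta)) =
     Cdiv (Cmult (Cmult (Cminus w zeta) (Cminus w zeta)) (Copp (Cmult c (Cminus (RtoC 1) (Cmult c z)))))
          (Cmult (Cmult A A) Bw)).
  { unfold mob, dmob. fold c. fold A Bw. unfold A, Bw in *. field. split; auto. }
  rewrite E. rewrite Cmod_div.
  2:{ apply Cmod_gt_0. rewrite !Cmod_mult. apply Rmult_lt_0_compat; [apply Rmult_lt_0_compat|]; lra. }
  rewrite !Cmod_mult, Cmod_opp, Cmod_mult.
  assert (Hc : Cmod c < 1) by (unfold c; rewrite Cmod_conj; auto).
  assert (H1cz : Cmod (Cminus (RtoC 1) (Cmult c z)) <= 2).
  { pose proof (Cmod_triangle (RtoC 1) (Copp (Cmult c z))). rewrite Cmod_opp, Cmod_1, Cmod_mult in H.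
    pose proof (Cmod_ge_0 c). pose proof (Cmod_ge_0 z). unfold Cminus. nra. }
  set (d := Cmod (Cminus w zeta)) in *.
  pose proof (Cmod_ge_0 (Cminus w zeta)). fold d in H.
  pose proof (Cmod_ge_0 c). pose proof (Cmod_ge_0 (Cminus (RtoC 1) (Cmult c z))).
  set (q := Cmod (Cminus (RtoC 1) (Cmult c z))) in *.
  apply Rle_trans with (d * d * 2 / (m * m * m)).
  { unfold Rdiv. apply Rmult_le_compat.
    - apply Rmult_le_pos; [nra| apply Rmult_le_pos; lra].
    - apply Rlt_le, Rinv_0_lt_compat. apply Rmult_lt_0_compat; [apply Rmult_lt_0_compat|]; lra.
    - apply Rmult_le_compat_l. nra. nra.
    - apply Rinv_le_contravar. apply Rmult_lt_0_compat; [apply Rmult_lt_0_compat|]; lra.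
      apply Rmult_le_compat; try nra. }
  apply Rle_trans with (d * (eps * (m * m * m) / 2) * 2 / (m * m * m)).
  { unfold Rdiv. apply Rmult_le_compat_r. apply Rlt_le, Rinv_0_lt_compat. nra.
    apply Rmult_le_compat_r. lra. apply Rmult_le_compat_l; lra. }
  right. field. lra.
Qed.
Lemma is_derive_R_eps (f : R -> R) (x l : R) :
  (forall eps : R, 0 < eps -> exists del : R, 0 < del /\ forall y : R,
     Rabs (y - x) < del -> Rabs (f y - f x - (y - x) * l) <= eps * Rabs (y - x)) ->
  is_derive f x l.
Proof.
  intros H. split.
  - apply is_linear_scal_l.
  - intros y Hy. apply (@is_filter_lim_locally_unique R_AbsRing (AbsRing_NormedModule R_AbsRing)) in Hy. subst y.
    intros eps.
    destruct (H eps (cond_pos eps)) as [del [Hd Hw]].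
    exists (mkposreal del Hd). intros y Hy. apply Hw. exact Hy.
Qed.



Lemma restrict (F : C -> C) (t0 : R) (d u : C) :
  @is_derive C_AbsRing C_NormedModule F (RtoC t0) d ->
  is_derive (fun s : R => Re (Cmult u (F (RtoC s)))) t0 (Re (Cmult u d)).
Proof.
  intros HF. apply is_derive_R_eps. intros eps Heps.
  destruct (eps_of_is_derive_C F (RtoC t0) d HF (eps / (Cmod u + 1))) as [del [Hd Hw]].
  { apply Rdiv_lt_0_compat. lra. pose proof (Cmod_ge_0 u). lra. }
  exists del. split. exact Hd. intros y Hy.
  assert (E : Cminus (RtoC y) (RtoC t0) = RtoC (y - t0)).
  { unfold Cminus, Cplus, Copp, RtoC. simpl. f_equal; ring. }
  specialize (Hw (RtoC y)). rewrite E, Cmod_R in Hw. specialize (Hw Hy).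
  set (X := Cminus (Cminus (F (RtoC y)) (F (RtoC t0))) (Cmult (RtoC (y - t0)) d)) in Hw.
  assert (E2 : Re (Cmult u (F (RtoC y))) - Re (Cmult u (F (RtoC t0))) - (y - t0) * Re (Cmult u d) = Re (Cmult u X)).
  { unfold X. destruct u as [u1 u2]. destruct (F (RtoC y)) as [a1 a2]. destruct (F (RtoC t0)) as [b1 b2].
    destruct d as [d1 d2]. simpl. ring. }
  rewrite E2.
  eapply Rle_trans. apply re_le_Cmod. rewrite Cmod_mult.
  pose proof (Cmod_ge_0 u). pose proof (Cmod_ge_0 X). pose proof (Rabs_pos (y - t0)).
  apply Rle_trans with (Cmod u * (eps / (Cmod u + 1) * Rabs (y - t0))).
  apply Rmult_le_compat_l; lra.
  assert (Cmod u * (eps / (Cmod u + 1)) <= eps).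
  { apply Rle_trans with ((Cmod u + 1) * (eps / (Cmod u + 1))).
    apply Rmult_le_compat_r. apply Rlt_le, Rdiv_lt_0_compat; lra. lra.
    right. field. lra. }
  rewrite <- Rmult_assoc. apply Rmult_le_compat_r; lra.
Qed.


Lemma key_id (z w : C) :
  Cmod (Cplus (RtoC 1) (Cmult (Cconj z) w)) ^ 2 - Cmod (Cplus w z) ^ 2 =
  (1 - Cmod z ^ 2) * (1 - Cmod w ^ 2).
Proof. rewrite !Cmod2_alt. destruct z, w. simpl. ring. Qed.

Lemma Cmod_1_conj (z : C) : Cmod z < 1 -> Cmod (Cminus (RtoC 1) (Cmult (Cconj z) z)) = 1 - Cmod z ^ 2.
Proof.
  intros Hz. assert (E : Cminus (RtoC 1) (Cmult (Cconj z) z) = RtoC (1 - Cmod z ^ 2)).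
  { rewrite Cmod2_alt. destruct z. unfold Cminus, Cplus, Copp, Cmult, RtoC, Cconj; simpl. f_equal; ring. }
  rewrite E, Cmod_R, Rabs_pos_eq. auto. pose proof (Cmod_ge_0 z). nra.
Qed.

Lemma mob_sp (z w : C) : Cmod z < 1 -> Cmod w < 1 ->
  1 - Cmod (mob z w) ^ 2 = (1 - Cmod z ^ 2) * (1 - Cmod w ^ 2) / Cmod (Cplus (RtoC 1) (Cmult (Cconj z) w)) ^ 2
  /\ Cmod (dmob z w) * (1 - Cmod w ^ 2) = 1 - Cmod (mob z w) ^ 2.
Proof.
  intros Hz Hw. pose proof (mob_den_nz z w Hz Hw) as HA.
  pose proof (mob_den_lb z w Hz Hw) as HAl.
  assert (Ap : 0 < Cmod (Cplus (RtoC 1) (Cmult (Cconj z) w))) by (apply Cmod_gt_0; auto).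
  assert (E1 : 1 - Cmod (mob z w) ^ 2 = (1 - Cmod z ^ 2) * (1 - Cmod w ^ 2) / Cmod (Cplus (RtoC 1) (Cmult (Cconj z) w)) ^ 2).
  { unfold mob. rewrite Cmod_div by auto. rewrite <- key_id. field. lra. }
  split. exact E1. rewrite E1. unfold dmob. rewrite Cmod_div, Cmod_mult, Cmod_1_conj by (auto; apply Cmod_gt_0; rewrite Cmod_mult; nra).
  field. lra.
Qed.

Lemma mob_in (z w : C) : Cmod z < 1 -> Cmod w < 1 -> Cmod (mob z w) < 1.
Proof.
  intros Hz Hw. destruct (mob_sp z w Hz Hw) as [E _].
  pose proof (mob_den_nz z w Hz Hw) as HA.
  assert (Ap : 0 < Cmod (Cplus (RtoC 1) (Cmult (Cconj z) w))) by (apply Cmod_gt_0; auto).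
  assert (0 < 1 - Cmod (mob z w) ^ 2).
  { rewrite E. apply Rdiv_lt_0_compat; [|nra]. pose proof (Cmod_ge_0 z). pose proof (Cmod_ge_0 w). apply Rmult_lt_0_compat; nra. }
  pose proof (Cmod_ge_0 (mob z w)). nra.
Qed.

Lemma lin_derive (z v zeta : C) :
  @is_derive C_AbsRing C_NormedModule (fun w => Cplus z (Cmult w v)) zeta v.
Proof.
  apply is_derive_C_eps. intros eps Heps. exists 1. split. lra. intros w _.
  replace (Cminus (Cminus (Cplus z (Cmult w v)) (Cplus z (Cmult zeta v))) (Cmult (Cminus w zeta) v)) with (RtoC 0) by ring.
  rewrite Cmod_0. pose proof (Cmod_ge_0 (Cminus w zeta)). nra.
Qed.

Lemma hol_der (h : C -> C) (Hh : analytic_on_D h) (z : C) : inD z ->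
  @is_derive C_AbsRing C_NormedModule h z (cderiv h z).
Proof. intros Hz. apply C_derive_correct. exact z. apply Hh. exact Hz. Qed.

Lemma is_derive_C_eps2 (F : C -> C) (z d : C) :
  (forall eps : R, 0 < eps -> exists del : R, 0 < del /\ forall w : C,
     Cmod (Cminus w z) < del -> Cmod (Cminus (Cminus (F w) (F z)) (Cmult (Cminus w z) d)) <= eps * Cmod (Cminus w z)) ->
  @is_derive C_AbsRing (AbsRing_NormedModule C_AbsRing) F z d.
Proof.
  intros H. split.
  - apply is_linear_scal_l.
  - intros x Hx. apply (@is_filter_lim_locally_unique C_AbsRing (AbsRing_NormedModule C_AbsRing)) in Hx. subst x.
    intros eps.
    destruct (H eps (cond_pos eps)) as [del [Hd Hw]].
    exists (mkposreal del Hd). intros y Hy. apply Hw. exact Hy.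
Qed.

Lemma conv_der (F : C -> C) (z d : C) :
  @is_derive C_AbsRing C_NormedModule F z d ->
  @is_derive C_AbsRing (AbsRing_NormedModule C_AbsRing) F z d.
Proof. intros H. apply is_derive_C_eps2. apply eps_of_is_derive_C. exact H. Qed.

Lemma gen_deriv (f h g : C -> C)
  (Hh : analytic_on_D h) (Hg : analytic_on_D g)
  (Hf : forall z : C, inD z -> f z = Cplus (h z) (Cconj (g z)))
  (P : C -> C) (t0 : R) (dP u : C) (r : R) :
  @is_derive C_AbsRing C_NormedModule P (RtoC t0) dP -> 0 < r ->
  (forall t, Rabs (t - t0) < r -> inD (P (RtoC t))) ->
  is_derive (fun t => Re (Cmult u (f (P (RtoC t))))) t0
    (Re (Cmult u (Cmult dP (cderiv h (P (RtoC t0))))) + Re (Cmult (Cconj u) (Cmult dP (cderiv g (P (RtoC t0)))))).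
Proof.
  intros HP Hr Hin.
  assert (Hin0 : inD (P (RtoC t0))) by (apply Hin; rewrite Rminus_diag, Rabs_R0; lra).
  pose proof (@is_derive_comp C_AbsRing C_NormedModule h P (RtoC t0) _ _ (hol_der h Hh _ Hin0) (conv_der _ _ _ HP)) as H1.
  pose proof (@is_derive_comp C_AbsRing C_NormedModule g P (RtoC t0) _ _ (hol_der g Hg _ Hin0) (conv_der _ _ _ HP)) as H2.
  apply (restrict _ _ _ u) in H1. apply (restrict _ _ _ (Cconj u)) in H2.
  pose proof (@is_derive_plus R_AbsRing R_NormedModule _ _ t0 _ _ H1 H2) as H3.
  eapply is_derive_ext_loc; [|exact H3].
  exists (mkposreal r Hr). intros t Ht. simpl.
  rewrite (Hf _ (Hin t Ht)).
  destruct u, (h (P (RtoC t))), (g (P (RtoC t))). unfold plus; simpl. ring.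
Qed.

Lemma der_val (f h g : C -> C)
  (Hh : analytic_on_D h) (Hg : analytic_on_D g)
  (Hf : forall z : C, inD z -> f z = Cplus (h z) (Cconj (g z)))
  (z v u : C) : inD z -> Cmod v = 1 ->
  Derive (fun t => Re (Cmult u (f (Cplus z (Cmult (RtoC t) v))))) 0 =
    Re (Cmult u (Cmult v (cderiv h z))) + Re (Cmult (Cconj u) (Cmult v (cderiv g z))).
Proof.
  intros Hz Hv. unfold inD in Hz.
  assert (Hr : 0 < 1 - Cmod z) by lra.
  pose proof (gen_deriv f h g Hh Hg Hf (fun w => Cplus z (Cmult w v)) 0 v u (1 - Cmod z)
    (lin_derive z v (RtoC 0)) Hr) as H.
  assert (E : Cplus z (Cmult (RtoC 0) v) = z) by ring.
  cbv beta in H. rewrite E in H.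
  apply is_derive_unique. apply H.
  intros t Ht. unfold inD. rewrite Rminus_0_r in Ht.
  eapply Rle_lt_trans. apply Cmod_triangle. rewrite Cmod_mult, Cmod_R, Hv. lra.
Qed.

Lemma jac (f h g : C -> C)
  (Hh : analytic_on_D h) (Hg : analytic_on_D g)
  (Hf : forall z : C, inD z -> f z = Cplus (h z) (Cconj (g z)))
  (z : C) : inD z -> jacobian f z = Cmod (cderiv h z) ^ 2 - Cmod (cderiv g z) ^ 2.
Proof.
  intros Hz.
  assert (Hx1 : Derive (fun t => fst (f (Cplus z (t, 0)))) 0 =
     Re (Cmult (RtoC 1) (Cmult (RtoC 1) (cderiv h z))) + Re (Cmult (Cconj (RtoC 1)) (Cmult (RtoC 1) (cderiv g z)))).
  { rewrite <- (der_val f h g Hh Hg Hf z (RtoC 1) (RtoC 1) Hz Cmod_1). apply Derive_ext. intros t.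
    replace (Cmult (RtoC t) (RtoC 1)) with ((t, 0) : C) by (unfold Cmult, RtoC; simpl; f_equal; ring).
    destruct (f (Cplus z (t, 0))). simpl. ring. }
  assert (Hx2 : Derive (fun t => snd (f (Cplus z (t, 0)))) 0 =
     Re (Cmult (0, -1) (Cmult (RtoC 1) (cderiv h z))) + Re (Cmult (Cconj (0, -1)) (Cmult (RtoC 1) (cderiv g z)))).
  { rewrite <- (der_val f h g Hh Hg Hf z (RtoC 1) (0, -1) Hz Cmod_1). apply Derive_ext. intros t.
    replace (Cmult (RtoC t) (RtoC 1)) with ((t, 0) : C) by (unfold Cmult, RtoC; simpl; f_equal; ring).
    destruct (f (Cplus z (t, 0))). simpl. lra. }
  assert (HCi : Cmod Ci = 1).
  { unfold Cmod, Ci. simpl fst; simpl snd. replace (0 ^ 2 + 1 ^ 2) with 1 by ring. apply sqrt_1. }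
  assert (Hy1 : Derive (fun t => fst (f (Cplus z (0, t)))) 0 =
     Re (Cmult (RtoC 1) (Cmult Ci (cderiv h z))) + Re (Cmult (Cconj (RtoC 1)) (Cmult Ci (cderiv g z)))).
  { rewrite <- (der_val f h g Hh Hg Hf z Ci (RtoC 1) Hz HCi). apply Derive_ext. intros t.
    replace (Cmult (RtoC t) Ci) with ((0, t) : C) by (unfold Cmult, RtoC, Ci; simpl; f_equal; ring).
    destruct (f (Cplus z (0, t))). simpl. ring. }
  assert (Hy2 : Derive (fun t => snd (f (Cplus z (0, t)))) 0 =
     Re (Cmult (0, -1) (Cmult Ci (cderiv h z))) + Re (Cmult (Cconj (0, -1)) (Cmult Ci (cderiv g z)))).
  { rewrite <- (der_val f h g Hh Hg Hf z Ci (0, -1) Hz HCi). apply Derive_ext. intros t.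
    replace (Cmult (RtoC t) Ci) with ((0, t) : C) by (unfold Cmult, RtoC, Ci; simpl; f_equal; ring).
    destruct (f (Cplus z (0, t))). simpl. ring. }
  unfold jacobian, dz, dzbar, pdx, pdy. rewrite Hx1, Hx2, Hy1, Hy2.
  rewrite !Cmod2_alt. destruct (cderiv h z), (cderiv g z). simpl. field.
Qed.

Lemma path_deriv_bound (f h g : C -> C)
  (Hh : analytic_on_D h) (Hg : analytic_on_D g)
  (Hf : forall z : C, inD z -> f z = Cplus (h z) (Cconj (g z)))
  (M : R) (Hpt : forall z, inD z -> (Cmod (cderiv h z) + Cmod (cderiv g z)) * (1 - Cmod z ^ 2) <= M)
  (z2 a u : C) (t0 : R) :
  Cmod z2 < 1 -> Rabs t0 * Cmod a < 1 ->
  exists D, is_derive (fun t => Re (Cmult u (f (mob z2 (Cplus (RtoC 0) (Cmult (RtoC t) a)))))) t0 D /\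
    D <= Cmod u * Cmod a * M / (1 - (t0 * Cmod a) ^ 2).
Proof.
  intros Hz2 Ht0.
  set (P := fun w => mob z2 (Cplus (RtoC 0) (Cmult w a))).
  set (zeta := Cplus (RtoC 0) (Cmult (RtoC t0) a)).
  assert (Hcz : forall t, Cmod (Cplus (RtoC 0) (Cmult (RtoC t) a)) = Rabs t * Cmod a).
  { intros t. replace (Cplus (RtoC 0) (Cmult (RtoC t) a)) with (Cmult (RtoC t) a) by ring.
    rewrite Cmod_mult, Cmod_R. reflexivity. }
  assert (Hzeta : Cmod zeta < 1) by (unfold zeta; rewrite Hcz; exact Ht0).
  assert (HP : @is_derive C_AbsRing C_NormedModule P (RtoC t0) (Cmult a (dmob z2 zeta))).
  { apply (@is_derive_comp C_AbsRing C_NormedModule (mob z2) (fun w => Cplus (RtoC 0) (Cmult w a)) (RtoC t0) _ a).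
    apply mob_derive; auto. apply conv_der. apply lin_derive. }
  pose proof (Cmod_ge_0 a) as Ha0.
  set (r := (1 - Rabs t0 * Cmod a) / (Cmod a + 1)).
  assert (Hr : 0 < r) by (unfold r; apply Rdiv_lt_0_compat; lra).
  pose proof (gen_deriv f h g Hh Hg Hf P t0 _ u r HP Hr) as H.
  assert (Hin : forall t, Rabs (t - t0) < r -> inD (P (RtoC t))).
  { intros t Ht. unfold P, inD. apply mob_in. exact Hz2. rewrite Hcz.
    assert (Rabs t <= Rabs t0 + Rabs (t - t0)).
    { replace t with (t0 + (t - t0)) at 1 by ring. apply Rabs_triang. }
    assert (r * (Cmod a + 1) = 1 - Rabs t0 * Cmod a) by (unfold r; field; lra).
    pose proof (Rabs_pos (t - t0)). nra. }
  specialize (H Hin).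
  eexists. split. exact H.
  fold zeta. unfold P. fold zeta.
  set (w := mob z2 zeta).
  assert (Hw : inD w) by (apply mob_in; auto).
  specialize (Hpt w Hw).
  destruct (mob_sp z2 zeta Hz2 Hzeta) as [_ Hsp]. fold w in Hsp.
  set (A := Cmod (cderiv h w)). set (B := Cmod (cderiv g w)). fold A B in Hpt.
  assert (E1 : forall v X, Re (Cmult v (Cmult (Cmult a (dmob z2 zeta)) X)) <= Cmod v * Cmod a * (Cmod (dmob z2 zeta) * Cmod X)).
  { intros v X. eapply Rle_trans. apply Rle_abs. eapply Rle_trans. apply re_le_Cmod. rewrite !Cmod_mult. right. ring. }
  pose proof (E1 u (cderiv h w)) as E2. pose proof (E1 (Cconj u) (cderiv g w)) as E3.
  rewrite Cmod_conj in E3. fold A in E2. fold B in E3.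
  assert (Hzz : Cmod zeta ^ 2 = (t0 * Cmod a) ^ 2).
  { unfold zeta. rewrite Hcz. rewrite !Rpow_mult_distr. f_equal. simpl. rewrite !Rmult_1_r. rewrite <- Rabs_mult. apply Rabs_pos_eq. nra. }
  rewrite <- Hzz.
  assert (Hq : 0 < 1 - Cmod zeta ^ 2) by (pose proof (Cmod_ge_0 zeta); nra).
  assert (Hdm : Cmod (dmob z2 zeta) * (A + B) <= M / (1 - Cmod zeta ^ 2)).
  { apply Rmult_le_reg_r with (1 - Cmod zeta ^ 2). exact Hq.
    unfold Rdiv. rewrite (Rmult_assoc M), Rinv_l by lra. rewrite Rmult_1_r.
    replace (Cmod (dmob z2 zeta) * (A + B) * (1 - Cmod zeta ^ 2)) with ((A + B) * (Cmod (dmob z2 zeta) * (1 - Cmod zeta ^ 2))) by ring.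
    rewrite Hsp. exact Hpt. }
  pose proof (Cmod_ge_0 u).
  apply Rle_trans with (Cmod u * Cmod a * (Cmod (dmob z2 zeta) * (A + B))). nra.
  replace (Cmod u * Cmod a * M / (1 - Cmod zeta ^ 2)) with (Cmod u * Cmod a * (M / (1 - Cmod zeta ^ 2))) by (unfold Rdiv; ring).
  apply Rmult_le_compat_l. nra. exact Hdm.
Qed.

Lemma supD_ub (phi : C -> R) : supD phi <> p_infty ->
  supD phi = Finite (real (supD phi)) /\ (forall z, inD z -> phi z <= real (supD phi)).
Proof.
  intros Hn. destruct (Lub_Rbar_correct (fun r => exists z : C, inD z /\ r = phi z)) as [Hub _].
  fold (supD phi) in Hub.
  assert (H0 : inD (RtoC 0)) by (unfold inD; rewrite Cmod_0; lra).
  pose proof (Hub (phi (RtoC 0)) (ex_intro _ (RtoC 0) (conj H0 eq_refl))) as H1.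
  destruct (supD phi) as [s| |] eqn:Es.
  - split. reflexivity. intros z Hz. apply (Hub (phi z)). exists z; auto.
  - congruence.
  - simpl in H1. contradiction.
Qed.

Lemma alg_bound (a b s W B : R) : 0 <= b < a -> b <= W * a -> 0 <= W < 1 -> 0 < s ->
  s * sqrt (Rabs (a ^ 2 - b ^ 2)) <= B -> (a + b) * s <= sqrt ((1 + W) / (1 - W)) * B.
Proof.
  intros Hab HbW HW Hs HB.
  rewrite Rabs_pos_eq in HB by nra.
  set (Q := (1 + W) / (1 - W)).
  assert (HQ : 0 <= Q) by (unfold Q; apply Rle_mult_inv_pos; lra).
  apply Rle_trans with (sqrt Q * (s * sqrt (a ^ 2 - b ^ 2))).
  2:{ apply Rmult_le_compat_l. apply sqrt_pos. exact HB. }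
  apply Rsqr_incr_0_var.
  2:{ apply Rmult_le_pos. apply sqrt_pos. apply Rmult_le_pos. lra. apply sqrt_pos. }
  unfold Rsqr.
  replace (sqrt Q * (s * sqrt (a ^ 2 - b ^ 2)) * (sqrt Q * (s * sqrt (a ^ 2 - b ^ 2))))
    with ((sqrt Q * sqrt Q) * (s * s) * (sqrt (a ^ 2 - b ^ 2) * sqrt (a ^ 2 - b ^ 2))) by ring.
  rewrite !sqrt_sqrt by nra.
  assert (Hk : (a + b) * (a + b) <= Q * (a ^ 2 - b ^ 2)).
  { unfold Q. apply Rmult_le_reg_r with (1 - W). lra.
    unfold Rdiv. replace ((1 + W) * / (1 - W) * (a ^ 2 - b ^ 2) * (1 - W)) with ((1 + W) * (a ^ 2 - b ^ 2) * ((1 - W) * / (1 - W))) by ring.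
    rewrite Rinv_r by lra. nra. }
  nra.
Qed.

Lemma G0_deriv (rho t : R) : 0 <= rho -> Rabs t * rho < 1 ->
  is_derive (fun t => / 2 * ln ((1 + t * rho) / (1 - t * rho))) t (rho / (1 - (t * rho) ^ 2)).
Proof.
  intros Hr Ht.
  assert (Ht' : Rabs (t * rho) < 1) by (rewrite Rabs_mult, (Rabs_pos_eq rho); auto).
  apply Rabs_def2 in Ht'. destruct Ht' as [Ht1 Ht2].
  auto_derive.
  - repeat split; try lra. apply Rdiv_lt_0_compat; lra.
  - field. repeat split; nra.
Qed.

Theorem mainTheorem10 (f h g : C -> C)
  (Hh : analytic_on_D h) (Hg : analytic_on_D g)
  (Hf : forall z : C, inD z -> f z = Cplus (h z) (Cconj (g z)))
  (Hloc : forall z : C, inD z -> cderiv h z <> RtoC 0)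
  (Hsp : forall z : C, inD z -> Cmod (cderiv g z) < Cmod (cderiv h z))
  (HBT : in_BT f)
  (Hw : Rbar_lt (dil_norm h g) 1) :
  forall z1 z2 : C, inD z1 -> inD z2 ->
    Cmod (Cminus (f z1) (f z2)) <=
      sqrt ((1 + real (dil_norm h g)) / (1 - real (dil_norm h g)))
      * real (beta2 f) * hyp_dist z1 z2.
Proof.
  intros z1 z2 Hz1 Hz2.
  assert (H0 : inD (RtoC 0)) by (unfold inD; rewrite Cmod_0; lra).
  assert (HWn : dil_norm h g <> p_infty) by (intro E; rewrite E in Hw; simpl in Hw; auto).
  destruct (supD_ub (fun z => Cmod (dilatation h g z)) HWn) as [EW HWub].
  fold (dil_norm h g) in EW, HWub.
  set (W := real (dil_norm h g)) in *.
  assert (HW1 : W < 1) by (rewrite EW in Hw; simpl in Hw; exact Hw).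
  assert (HW0 : 0 <= W) by (eapply Rle_trans; [apply Cmod_ge_0| apply (HWub _ H0)]).
  assert (HBn : beta2 f <> p_infty) by (unfold in_BT in HBT; intro E; rewrite E in HBT; simpl in HBT; auto).
  destruct (supD_ub (fun z => (1 - (Cmod z) ^ 2) * sqrt (Rabs (jacobian f z))) HBn) as [EB HBub].
  fold (beta2 f) in EB, HBub.
  set (B := real (beta2 f)) in *.
  assert (HB0 : 0 <= B).
  { eapply Rle_trans; [|apply (HBub _ H0)]. rewrite Cmod_0. apply Rmult_le_pos. simpl. lra. apply sqrt_pos. }
  set (K := sqrt ((1 + W) / (1 - W))).
  assert (HK0 : 0 <= K) by apply sqrt_pos.
  assert (Hpt : forall z, inD z -> (Cmod (cderiv h z) + Cmod (cderiv g z)) * (1 - Cmod z ^ 2) <= K * B).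
  { intros z Hz. apply alg_bound.
    - split. apply Cmod_ge_0. apply Hsp; auto.
    - pose proof (HWub z Hz) as Hd. unfold dilatation in Hd. rewrite Cmod_div in Hd by (apply Hloc; auto).
      assert (0 < Cmod (cderiv h z)) by (apply Cmod_gt_0; apply Hloc; auto).
      apply Rmult_le_reg_r with (/ Cmod (cderiv h z)). apply Rinv_0_lt_compat; auto.
      rewrite Rmult_assoc, Rinv_r by lra. rewrite Rmult_1_r. exact Hd.
    - lra.
    - unfold inD in Hz. pose proof (Cmod_ge_0 z). nra.
    - pose proof (HBub z Hz) as Hb. rewrite (jac f h g Hh Hg Hf z Hz) in Hb. exact Hb. }
  set (a := Cdiv (Cminus z1 z2) (Cminus (RtoC 1) (Cmult (Cconj z2) z1))).
  assert (Hc : Cconj (Copp z2) = Copp (Cconj z2)) by (destruct z2; unfold Cconj, Copp; simpl; f_equal; ring).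
  assert (Hmz2 : Cmod (Copp z2) < 1) by (rewrite Cmod_opp; exact Hz2).
  assert (Ea : a = mob (Copp z2) z1).
  { unfold a, mob. rewrite Hc. f_equal; ring. }
  assert (Ha1 : Cmod a < 1) by (rewrite Ea; apply mob_in; auto).
  set (rho := Cmod a).
  assert (Hr1 : rho < 1) by exact Ha1.
  assert (Hrho : 0 <= rho) by apply Cmod_ge_0.
  assert (HD1 : Cminus (RtoC 1) (Cmult (Cconj z2) z1) <> RtoC 0).
  { pose proof (mob_den_nz (Copp z2) z1 Hmz2 Hz1) as Hn. rewrite Hc in Hn.
    replace (Cplus (RtoC 1) (Cmult (Copp (Cconj z2)) z1)) with (Cminus (RtoC 1) (Cmult (Cconj z2) z1)) in Hn by ring. exact Hn. }
  assert (HD2 : Cminus (RtoC 1) (Cmult (Cconj z2) z2) <> RtoC 0).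
  { intro E. pose proof (Cmod_1_conj z2 Hz2) as E2. rewrite E, Cmod_0 in E2. pose proof (Cmod_ge_0 z2). unfold inD in Hz2. nra. }
  assert (Ez1 : mob z2 (Cplus (RtoC 0) (Cmult (RtoC 1) a)) = z1).
  { unfold mob. replace (Cplus (Cplus (RtoC 0) (Cmult (RtoC 1) a)) z2) with
      (Cmult z1 (Cdiv (Cminus (RtoC 1) (Cmult (Cconj z2) z2)) (Cminus (RtoC 1) (Cmult (Cconj z2) z1))))
      by (unfold a; field; auto).
    replace (Cplus (RtoC 1) (Cmult (Cconj z2) (Cplus (RtoC 0) (Cmult (RtoC 1) a)))) with
      (Cdiv (Cminus (RtoC 1) (Cmult (Cconj z2) z2)) (Cminus (RtoC 1) (Cmult (Cconj z2) z1)))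
      by (unfold a; field; auto).
    field. auto. }
  assert (Ez2 : mob z2 (Cplus (RtoC 0) (Cmult (RtoC 0) a)) = z2).
  { unfold mob. replace (Cplus (RtoC 0) (Cmult (RtoC 0) a)) with (RtoC 0) by ring.
    replace (Cplus (RtoC 1) (Cmult (Cconj z2) (RtoC 0))) with (RtoC 1) by ring.
    field. }
  set (d := Cminus (f z1) (f z2)).
  set (u := Cconj d).
  set (G0 := fun t => / 2 * ln ((1 + t * rho) / (1 - t * rho))).
  set (psi := fun t => Re (Cmult u (f (mob z2 (Cplus (RtoC 0) (Cmult (RtoC t) a))))) - Cmod u * (K * B) * G0 t).
  assert (Hder : forall t, 0 <= t <= 1 -> is_derive psi t (Derive psi t) /\ Derive psi t <= 0).
  { intros t Ht.
    assert (Htr : Rabs t * rho < 1).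
    { rewrite Rabs_pos_eq by lra. fold rho in Ha1. nra. }
    destruct (path_deriv_bound f h g Hh Hg Hf (K * B) Hpt z2 a u t Hz2 Htr) as [D [HD1' HD2']].
    pose proof (G0_deriv rho t Hrho Htr) as HG.
    assert (Hps : is_derive psi t (D - Cmod u * (K * B) * (rho / (1 - (t * rho) ^ 2)))).
    { unfold psi. apply (@is_derive_minus R_AbsRing R_NormedModule). exact HD1'.
      apply (is_derive_scal (fun t => / 2 * ln ((1 + t * rho) / (1 - t * rho)))). exact HG. }
    rewrite (is_derive_unique _ _ _ Hps). split. exact Hps.
    fold rho in HD2'. unfold Rdiv in *. lra. }
  assert (Hmvt : psi 1 - psi 0 <= 0).
  { destruct (MVT_gen psi 0 1 (Derive psi)) as [cc [Hcc Heq]].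
    - intros x Hx. rewrite Rmin_left, Rmax_right in Hx by lra. apply Hder. lra.
    - intros x Hx. rewrite Rmin_left, Rmax_right in Hx by lra.
      apply continuity_pt_filterlim. apply (ex_derive_continuous psi x).
      exists (Derive psi x). apply Hder. lra.
    - rewrite Rmin_left, Rmax_right in Hcc by lra. rewrite Heq.
      destruct (Hder cc Hcc) as [_ Hn]. nra. }
  assert (HG00 : G0 0 = 0).
  { unfold G0. replace ((1 + 0 * rho) / (1 - 0 * rho)) with 1 by field. rewrite ln_1. ring. }
  assert (HG1 : G0 1 = hyp_dist z1 z2).
  { unfold G0, hyp_dist. change (pseudo_hyp z1 z2) with rho. f_equal. f_equal. f_equal; ring. }
  assert (HG1p : 0 <= G0 1).
  { unfold G0. replace (1 * rho) with rho by ring.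
    assert (1 <= (1 + rho) / (1 - rho)).
    { apply Rmult_le_reg_r with (1 - rho). lra. unfold Rdiv. rewrite Rmult_assoc, Rinv_l by lra. lra. }
    destruct (Rle_lt_or_eq_dec _ _ H) as [Hl|He].
    - pose proof (ln_increasing 1 _ Rlt_0_1 Hl). rewrite ln_1 in H1. lra.
    - rewrite <- He, ln_1. lra. }
  unfold psi in Hmvt. rewrite Ez1, Ez2, HG00 in Hmvt.
  assert (Ere : Re (Cmult u (f z1)) - Re (Cmult u (f z2)) = Cmod d ^ 2).
  { rewrite Cmod2_alt. unfold u, d. destruct (f z1), (f z2). simpl. ring. }
  assert (Hu : Cmod u = Cmod d) by (unfold u; apply Cmod_conj).
  rewrite Hu, HG1 in Hmvt. rewrite HG1 in HG1p.
  fold d K B. pose proof (Cmod_ge_0 d).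
  assert (HKBG : 0 <= K * B * hyp_dist z1 z2) by (apply Rmult_le_pos; [apply Rmult_le_pos|]; auto).
  destruct (Req_dec (Cmod d) 0) as [Hd0|Hd0].
  - rewrite Hd0. exact HKBG.
  - assert (Cmod d * (Cmod d - K * B * hyp_dist z1 z2) <= 0) by nra.
    nra.
Qed.
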